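(* Let $\mathcal N$ be a feedforward ANN consisting of MatMul layers (each a convolution or fully-connected linear map with bias followed by batch normalization) alternating with QCFS activation layers, beginning with a MatMul layer followed by a QCFS layer and ending with a MatMul layer, where the $n$-th QCFS layer has quantization step $L_n$ and threshold $\theta_n$. Let $\mathcal M$ be the PASC formulation of $\mathcal N$ (described in the context). Then $\mathcal M$ and $\mathcal N$ are mathematically equivalent: for every input $z$ and every output class $c\in\mathbf C$, $f^{z}_{\mathcal M}(c)=f^{z}_{\mathcal N}(c)$.
   Context: QCFS activation with quantization step $L$ and threshold $\theta$: $\widehat h(y)=\theta\,\mathrm{clip}\!\left(\frac1L\left\lfloor\frac{yL}{\theta}+\frac12\right\rfloor,0,1\right)$ elementwise, with $\mathrm{clip}(u,0,1)=\min(\max(u,0),1)$. $H(y)=1$ if $y\ge0$, else $0$. A MatMul layer computes $y\mapsto\gamma\frac{y*W+b-\mu}{\sqrt{\sigma^2+\epsilon}}+\beta$. PASC formulation $\mathcal M$ of $\mathcal N$: (i) the first MatMul layer is computed as in $\mathcal N$ on the input, giving $X$; the first QCFS layer (step $L_1$, threshold $\theta_1$) is replaced by: $\theta^*=\theta_1/L_1$, $\mathrm{mem}(0)=\widehat h(X)$, and for $t=1..L_1$, $s(t)=H(\mathrm{mem}(t-1)-\theta^* )\theta^*$, $\mathrm{mem}(t)=\mathrm{mem}(t-1)-s(t)$, producing $L_1$ timesteps. (ii) Every subsequent MatMul layer receiving $L$ timesteps $z_1,\dots,z_L$ outputs, for each $i$, $z_i'=\gamma\frac{z_i*W+b/L-\mu/L}{\sqrt{\sigma^2+\epsilon}}+\beta/L$.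 (iii) Every subsequent QCFS layer with step $L_n$ and threshold $\theta_n$, receiving $L_{n-1}$ timesteps $X[1..L_{n-1}]$, is replaced by the following elementwise procedure: $\theta^*=\theta_n/L_n$, $m=\theta^*/2$, $s=0$; Stage 1: for $t=1..L_{n-1}$: $m\leftarrow m+X[t]$, and if $m\ge\theta^*$ then $s\leftarrow s+\theta^*$, $m\leftarrow m-\theta^*$; Stage 2: for $t=1..\max(L_{n-1},L_n)-1$: if $m\ge\theta^*$ then $s\leftarrow s+\theta^*$, $m\leftarrow m-\theta^*$, else if $m<0$ then $s\leftarrow s-\theta^*$, $m\leftarrow m+\theta^*$; Stage 3: $\mathrm{mem}(0)=s$ and for $t=1..L_n$, output $H(\mathrm{mem}(t-1)-\theta^* )\theta^*$ at timestep $t$ and subtract it from $\mathrm{mem}$. (iv) If the final MatMul layer outputs $L$ timesteps $z_1,\dots,z_L$, the SNN output vector is $z^*=\frac1L\sum_{i=1}^L z_i$. Classification map: for a model with final output vector $v$ (the ANN's final layer output for $\mathcal N$, the vector $z^*$ for $\mathcal M$) on input $z$, $f^z(c)=v[c]/\sum_{c'\in\mathbf C}v[c']$ for each class $c$ in the set $\mathbf C$ of output classes. Two models are mathematically equivalent if their classification maps coincide for every input. *)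

(* Defs.v *)
From mathcomp Require Import all_boot all_order all_algebra.
From mathcomp Require Import reals.
Set Implicit Arguments. Unset Strict Implicit. Unset Printing Implicit Defensive.
Import Order.TTheory GRing.Theory Num.Theory.
Local Open Scope ring_scope.

Section PASC.
Variable R : realType.

Definition heav (y : R) : R := if 0 <= y then 1 else 0.

Definition clip01 (u : R) : R := Num.min (Num.max u 0) 1.

Definition qcfs (L : nat) (theta : R) (y : R) : R :=
  theta * clip01 ((Num.floor (y * L%:R / theta + 2^-1))%:~R / L%:R).

Definition qcfs_vec (L : nat) (theta : R) m (y : 'rV[R]_m) : 'rV[R]_m :=
  \row_j qcfs L theta (y 0 j).

(** A MatMul layer: linear map y |-> y *m W (fully connected, or a
    convolution written as its matrix), bias b, batch-norm parameters
    gamma, beta, mu, sigma2 (variance), eps, applied per output feature. *)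
Record matmul (m n : nat) := MatMul {
  mm_W : 'M[R]_(m, n);
  mm_b : 'rV[R]_n;
  mm_gamma : 'rV[R]_n;
  mm_beta : 'rV[R]_n;
  mm_mu : 'rV[R]_n;
  mm_sigma2 : 'rV[R]_n;
  mm_eps : 'rV[R]_n }.

Definition mm_apply m n (M : matmul m n) (y : 'rV[R]_m) : 'rV[R]_n :=
  \row_j (mm_gamma M 0 j * ((y *m mm_W M) 0 j + mm_b M 0 j - mm_mu M 0 j)
            / Num.sqrt (mm_sigma2 M 0 j + mm_eps M 0 j) + mm_beta M 0 j).

Definition mm_step m n (M : matmul m n) (L : nat) (z : 'rV[R]_m) : 'rV[R]_n :=
  \row_j (mm_gamma M 0 j * ((z *m mm_W M) 0 j + mm_b M 0 j / L%:R
                             - mm_mu M 0 j / L%:R)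
            / Num.sqrt (mm_sigma2 M 0 j + mm_eps M 0 j) + mm_beta M 0 j / L%:R).

(** Network body, indexed by the current dimension m, with c output
    classes:  BLast L theta M  = QCFS(L,theta) on dim m then final MatMul M;
              BCons L theta M B = QCFS(L,theta) on dim m, MatMul M : m -> k,
                                  then the rest B. *)
Inductive body (c : nat) : nat -> Type :=
| BLast : forall m, nat -> R -> matmul m c -> body c m
| BCons : forall m k, nat -> R -> matmul m k -> body c k -> body c m.

Inductive net (c d0 : nat) : Type :=
| Net : forall d1, matmul d0 d1 -> body c d1 -> net c d0.

Fixpoint body_wf c m (B : body c m) : Prop :=
  match B with
  | BLast _ L th _ => (0 < L)%N /\ 0 < th
  | BCons _ _ L th _ B' => [/\ (0 < L)%N, 0 < th & body_wf B']
  end.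

Definition net_wf c d0 (N : net c d0) : Prop :=
  match N with Net _ _ B => body_wf B end.

Fixpoint body_eval c m (B : body c m) : 'rV[R]_m -> 'rV[R]_c :=
  match B in body _ m0 return 'rV[R]_m0 -> 'rV[R]_c with
  | BLast _ L th M => fun x => mm_apply M (qcfs_vec L th x)
  | BCons _ _ L th M B' => fun x => body_eval B' (mm_apply M (qcfs_vec L th x))
  end.

Definition ann_eval c d0 (N : net c d0) (z : 'rV[R]_d0) : 'rV[R]_c :=
  match N with Net _ M1 B => body_eval B (mm_apply M1 z) end.

Fixpoint fire (ths mem : R) (L : nat) : seq R :=
  match L with
  | 0 => [::]
  | L'.+1 => let s := heav (mem - ths) * ths in s :: fire ths (mem - s) L'
  end.

Definition pasc_first (L : nat) (th : R) (X : R) : seq R :=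
  fire (th / L%:R) (qcfs L th X) L.

(** Later QCFS layer, scalar version, on the input spike train X
    (of length Lprev = L_{n-1}). State is the pair (m, s). *)
Definition stage1_step (ths : R) (ms : R * R) (x : R) : R * R :=
  let m := ms.1 + x in
  if ths <= m then (m - ths, ms.2 + ths) else (m, ms.2).

Definition stage2_step (ths : R) (ms : R * R) : R * R :=
  let: (m, s) := ms in
  if ths <= m then (m - ths, s + ths)
  else if m < 0 then (m + ths, s - ths) else (m, s).

Definition pasc_later (Lprev L : nat) (th : R) (X : seq R) : seq R :=
  let ths := th / L%:R in
  let ms1 := foldl (stage1_step ths) (ths / 2%:R, 0) X in
  let ms2 := iter (maxn Lprev L).-1 (stage2_step ths) ms1 in
  fire ths ms2.2 L.

Definition lift_vec m (L : nat) (f : 'I_m -> seq R) : seq 'rV[R]_m :=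
  mkseq (fun t => \row_j nth 0 (f j) t) L.

Definition pasc_first_vec m (L : nat) (th : R) (X : 'rV[R]_m) : seq 'rV[R]_m :=
  lift_vec L (fun j => pasc_first L th (X 0 j)).

Definition pasc_later_vec m (Lprev L : nat) (th : R) (X : seq 'rV[R]_m)
  : seq 'rV[R]_m :=
  lift_vec L (fun j => pasc_later Lprev L th [seq (x : 'rV[R]_m) 0 j | x <- X]).

Definition snn_output c (L : nat) (Z : seq 'rV[R]_c) : 'rV[R]_c :=
  (L%:R)^-1 *: \sum_(z <- Z) z.

(** PASC evaluation of the body after the first QCFS layer; Lprev is the
    number of timesteps (step L_{n-1} of the previous QCFS layer). *)
Fixpoint body_pasc c m (Lprev : nat) (B : body c m)
  : seq 'rV[R]_m -> 'rV[R]_c :=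
  match B in body _ m0 return seq 'rV[R]_m0 -> 'rV[R]_c with
  | BLast _ L th M => fun X =>
      snn_output L (map (mm_step M L) (pasc_later_vec Lprev L th X))
  | BCons _ _ L th M B' => fun X =>
      body_pasc L B' (map (mm_step M L) (pasc_later_vec Lprev L th X))
  end.

Definition pasc_eval c d0 (N : net c d0) (z : 'rV[R]_d0) : 'rV[R]_c :=
  match N with
  | Net _ M1 B =>
    let X := mm_apply M1 z in
    match B in body _ m0 return 'rV[R]_m0 -> 'rV[R]_c with
    | BLast _ L th M => fun X =>
        snn_output L (map (mm_step M L) (pasc_first_vec L th X))
    | BCons _ _ L th M B' => fun X =>
        body_pasc L B' (map (mm_step M L) (pasc_first_vec L th X))
    end X
  end.

Definition classif c (v : 'rV[R]_c) (k : 'I_c) : R :=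
  v 0 k / \sum_(k' < c) v 0 k'.

End PASC.

(* Main.v *)
Require Import Defs.
From mathcomp Require Import all_boot all_order all_algebra.
From mathcomp Require Import reals.
From mathcomp Require Import zify ring lra.
Set Implicit Arguments. Unset Strict Implicit. Unset Printing Implicit Defensive.
Import Order.TTheory GRing.Theory Num.Theory.
Local Open Scope ring_scope.

Section S.
Variable R : realType.

Definition clampz (j : int) (L : nat) : int := Num.max 0 (Num.min j L%:Z).

Lemma fire_sum (ths : R) L : 0 < ths -> forall (j : int) mem, mem = j%:~R * ths ->
  \sum_(x <- fire ths mem L) x = (clampz j L)%:~R * ths /\ size (fire ths mem L) = L.
Proof.
move=> hp; elim: L => [|L IH] j mem -> /=.
  rewrite big_nil; split=> //; rewrite /clampz.
  have -> : Num.max 0 (Num.min j 0%:Z) = 0 by lia.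
  by rewrite mul0r.
rewrite big_cons /heav.
have [hj|hj] := lerP 1 j.
  have -> : 0 <= j%:~R * ths - ths.
    rewrite subr_ge0 -{1}(mul1r ths) ler_pM2r //. by rewrite ler1z.
  have E : j%:~R * ths - 1 * ths = (j - 1)%:~R * ths by rewrite mul1r intrB mulrBl mul1r.
  rewrite E; have [-> ->] := IH (j - 1) _ erefl; split=> //.
  rewrite /clampz.
  have -> : Num.max 0 (Num.min (j - 1) L%:Z) = Num.max 0 (Num.min j L.+1%:Z) - 1 by lia.
  rewrite intrB /=; ring.
have -> : (0 <= j%:~R * ths - ths) = false.
  apply/negbTE; rewrite -ltNge subr_lt0 -{2}(mul1r ths) ltr_pM2r //.
  by rewrite ltrz1.
rewrite mul0r subr0 add0r.
have [-> ->] := IH j _ erefl; split=> //.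
rewrite /clampz.
have -> : Num.max 0 (Num.min j L%:Z) = 0 by lia.
have -> : Num.max 0 (Num.min j L.+1%:Z) = 0 by lia.
done.
Qed.

Lemma clip_clamp (th : R) (L : nat) (F : int) : (0 < L)%N ->
  th * clip01 (F%:~R / L%:R) = (clampz F L)%:~R * (th / L%:R).
Proof.
move=> hL; have hL' : 0 < L%:R :> R by rewrite ltr0n.
rewrite /clip01.
have [h0|h0] := lerP F 0.
  have -> : clampz F L = 0 by rewrite /clampz; lia.
  have hu : F%:~R / L%:R <= 0 :> R.
    by rewrite pmulr_lle0 ?invr_gt0 // lerz0.
  rewrite (max_r hu) (min_l ler01) mulr0 mul0r //.
have [h1|h1] := lerP F L%:Z.
  have -> : clampz F L = F by rewrite /clampz; lia.
  have hu : 0 <= F%:~R / L%:R :> R.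
    by rewrite divr_ge0 // ler0z; lia.
  have hu1 : F%:~R / L%:R <= 1 :> R.
    by rewrite ler_pdivrMr // mul1r -[L%:R]/((L%:Z)%:~R) ler_int.
  rewrite (max_l hu) (min_l hu1); rewrite mulrA [th * _]mulrC -mulrA //.
have -> : clampz F L = L%:Z by rewrite /clampz; lia.
have hu1 : 1 <= F%:~R / L%:R :> R.
  by rewrite ler_pdivlMr // mul1r -[L%:R]/((L%:Z)%:~R) ler_int; lia.
rewrite (max_l (le_trans ler01 hu1)) (min_r hu1) mulr1.
rewrite -[(L%:Z)%:~R]/(L%:R : R) mulrC -mulrA mulVf ?mulr1 //.
by rewrite gt_eqF.
Qed.

Lemma stage1_inv (ths : R) (xs : seq R) : 0 < ths ->
  let ms := foldl (stage1_step ths) (ths / 2%:R, 0) xs in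
  exists j : int, [/\ ms.2 = j%:~R * ths,
    ms.1 + ms.2 = ths / 2%:R + \sum_(x <- xs) x,
    0 <= j <= (size xs)%:Z &
    ((0 < size xs)%N -> (ths <= ms.1 -> 1 <= j) /\ (ms.1 < 0 -> j <= (size xs)%:Z - 1))].
Proof.
move=> hp; elim/last_ind: xs => [|xs x IH] /=.
  by exists 0; rewrite big_nil mul0r addr0; split.
rewrite foldl_rcons size_rcons -cats1 big_cat big_seq1 /=.
case: (foldl _ _ xs) IH => m0 s0 /= [j [Hs Hc Hj _]].
rewrite /stage1_step /=.
case: ifP => H /=.
  exists (j + 1); split.
  - by rewrite Hs intrD mulrDl mul1r.
  - lra.
  - lia.
  - move=> _; split; first lia.
    by move=> h; exfalso; lra.
exists j; split => //.
- lra.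
- lia.
- move=> _; split; last by move=> _; lia.
  by move=> H'; move: H; rewrite H'.
Qed.

Lemma stage2_inv (ths : R) (C : R) (j : int) m s k : 0 < ths ->
  s = j%:~R * ths -> m + s = C ->
  let ms := iter k (stage2_step ths) (m, s) in
  exists jk : int, [/\ ms.2 = jk%:~R * ths, ms.1 + ms.2 = C &
   ((0 <= ms.1 < ths) \/ (ths <= ms.1 /\ jk = j + k%:Z) \/ (ms.1 < 0 /\ jk = j - k%:Z))].
Proof.
move=> hp Hs Hc; elim: k => [|k IH] /=.
  exists j; split => //.
  case: (lerP ths m) => h1; first by right; left; split=> //; lia.
  case: (lerP 0 m) => h2; first by left; apply/andP; split.
  by right; right; split=> //; lia.
case: (iter k _ _) IH => m' s' /= [jk [Hs' Hc' Hcase]].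
rewrite /stage2_step.
case: ifP => h1 /=.
  exists (jk + 1); split.
  - by rewrite Hs' intrD mulrDl mul1r.
  - by rewrite -Hc'; ring.
  - have h0 : 0 <= m' - ths by rewrite subr_ge0.
    case: Hcase => [/andP [_ h]|[[_ ->]|[h _]]].
    + by move: h; rewrite ltNge h1.
    + case: (lerP ths (m' - ths)) => h2; first by right; left; split=> //; lia.
      by left; apply/andP; split.
    + exfalso; lra.
case: ifP => h2 /=.
  exists (jk - 1); split.
  - by rewrite Hs' intrB mulrBl mul1r.
  - by rewrite -Hc'; ring.
  - have h3 : m' + ths < ths by lra.
    case: Hcase => [/andP [h _]|[[h _]|[_ ->]]].
    + by move: h; rewrite leNgt h2.
    + by move: h; rewrite h1.
    + case: (lerP 0 (m' + ths)) => h4; first by left; apply/andP; split.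
      by right; right; split=> //; lia.
exists jk; split => //.
case: Hcase => [h|[[h _]|[h _]]]; first by left.
- by move: h; rewrite h1.
- by move: h; rewrite h2.
Qed.

Lemma size_fire (ths mem : R) L : size (fire ths mem L) = L.
Proof. by elim: L mem => [|L IH] mem //=; rewrite IH. Qed.

Lemma pasc_later_sum (L : nat) (th : R) (xs : seq R) : (0 < L)%N -> 0 < th ->
  (0 < size xs)%N ->
  \sum_(x <- pasc_later (size xs) L th xs) x = qcfs L th (\sum_(x <- xs) x).
Proof.
move=> hL hth hn.
have hL' : 0 < L%:R :> R by rewrite ltr0n.
rewrite /pasc_later /qcfs.
set ths := th / L%:R.
have hp : 0 < ths by rewrite divr_gt0.
set N := (maxn (size xs) L).-1.
have hN1 : (size xs <= N.+1)%N by rewrite /N prednK ?leq_maxl // (leq_trans hn (leq_maxl _ _)).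
have hN2 : (L <= N.+1)%N by rewrite /N prednK ?leq_maxr // (leq_trans hn (leq_maxl _ _)).
have H1 := stage1_inv xs hp; move: H1; lazy zeta.
case: foldl => m1 s1 /= [j1 [Hs1 Hc1 Hj1 Hl]].
have [Hl1 Hl2] := Hl hn.
have H2 := stage2_inv N hp Hs1 (erefl (m1 + s1)); move: H2; lazy zeta.
case: (iter N _ _) => m2 s2 /= [j2 [Hs2 Hc2 Hcase]].
have [-> _] := fire_sum L hp Hs2.
rewrite (clip_clamp _ _ hL) -/ths.
set y := \sum_(x <- xs) x.
set u := y * L%:R / th + 2^-1.
have Hu : m2 + j2%:~R * ths = ths * u.
  rewrite -Hs2 Hc2 Hc1 /u /ths /y; field.
  by rewrite !gt_eqF.
move: Hu; clearbody u => Hu.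
suff -> : clampz j2 L = clampz (Num.floor u) L by [].
case: Hcase => [/andP [h1 h2]|[[h1 Ej]|[h1 Ej]]]; rewrite ?Ej in Hs2 Hu *.
- rewrite (floor_def (m := j2)) //.
  rewrite intrD /=; apply/andP; split; nra.
- have hm1 : ths <= m1.
    move: Hc2; rewrite Hs2 Hs1 intrD mulrDl => Hc2.
    have : 0 <= N%:R * ths :> R by rewrite mulr_ge0 ?ler0n // ltW.
    rewrite -[N%:R]/((N%:Z)%:~R); lra.
  have := Hl1 hm1 => hj1.
  have : j1 + N%:Z + 1 <= Num.floor u.
    rewrite floor_ge_int !intrD /=.
    move: Hu; rewrite intrD /= => Hu; nra.
  rewrite /clampz => ?; lia.
- have hm1 : m1 < 0.
    move: Hc2; rewrite Hs2 Hs1 intrB mulrBl => Hc2.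
    have : 0 <= N%:R * ths :> R by rewrite mulr_ge0 ?ler0n // ltW.
    rewrite -[N%:R]/((N%:Z)%:~R); lra.
  have := Hl2 hm1 => hj1.
  have : Num.floor u < j1 - N%:Z.
    rewrite floor_lt_int.
    move: Hu; rewrite intrB /= => Hu; nra.
  rewrite /clampz => ?; lia.
Qed.

Lemma sum_lift m L (f : 'I_m -> seq R) : (forall j, size (f j) = L) ->
  \sum_(z <- lift_vec L f) z = \row_j \sum_(x <- f j) x.
Proof.
move=> hs; apply/rowP => j; rewrite !mxE /lift_vec /mkseq big_map summxE.
under eq_bigr do rewrite mxE.
by rewrite [RHS](big_nth 0) hs /index_iota subn0.
Qed.

Lemma size_lift m L (f : 'I_m -> seq R) : size (lift_vec L f) = L.
Proof. by rewrite size_mkseq. Qed.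

Lemma sum_col m (X : seq 'rV[R]_m) j :
  (\sum_(x <- X) x) 0 j = \sum_(v <- [seq (x : 'rV[R]_m) 0 j | x <- X]) v.
Proof. by rewrite summxE big_map. Qed.

Lemma sum_affine (T : Type) (Z : seq T) (a K : R) (f : T -> R) :
  \sum_(z <- Z) (a * f z + K) = a * \sum_(z <- Z) f z + (size Z)%:R * K.
Proof.
elim: Z => [|z Z IH]; first by rewrite !big_nil mulr0 mul0r addr0.
by rewrite !big_cons IH /= mulrDr -natr1; ring.
Qed.

Lemma sum_mm_step m n (M : matmul R m n) L (Z : seq 'rV[R]_m) :
  (0 < L)%N -> size Z = L ->
  \sum_(z <- Z) mm_step M L z = mm_apply M (\sum_(z <- Z) z).
Proof.
move=> hL hs; apply/rowP => j; rewrite summxE [RHS]mxE.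
set g := mm_gamma M 0 j; set sq := Num.sqrt _; set b := mm_b M 0 j.
set mu := mm_mu M 0 j; set be := mm_beta M 0 j.
have E : forall z : 'rV[R]_m, mm_step M L z 0 j =
   (g / sq) * (z *m mm_W M) 0 j + ((g / sq) * (b / L%:R - mu / L%:R) + be / L%:R).
  by move=> z; rewrite [LHS]mxE -/g -/sq -/b -/mu -/be; ring.
under eq_bigr do rewrite E.
rewrite sum_affine hs mulmx_suml summxE.
have hL' : L%:R != 0 :> R by rewrite pnatr_eq0 -lt0n.
set t := g / sq.
have -> : g * ((\sum_(i <- Z) (i *m mm_W M) 0 j) + b - mu) / sq =
   t * ((\sum_(i <- Z) (i *m mm_W M) 0 j) + b - mu) by rewrite /t; ring.
by field.
Qed.

Lemma later_vec m Lprev L th (X : seq 'rV[R]_m) :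
  (0 < L)%N -> 0 < th -> (0 < Lprev)%N -> size X = Lprev ->
  \sum_(z <- pasc_later_vec Lprev L th X) z = qcfs_vec L th (\sum_(x <- X) x).
Proof.
move=> hL hth hp hs; rewrite /pasc_later_vec sum_lift.
  apply/rowP => j; rewrite !mxE sum_col.
  have <- : size [seq (x : 'rV[R]_m) 0 j | x <- X] = Lprev by rewrite size_map.
  by apply: pasc_later_sum => //; rewrite size_map hs.
by move=> j; rewrite /pasc_later size_fire.
Qed.

Lemma first_vec m L th (X : 'rV[R]_m) :
  (0 < L)%N -> 0 < th ->
  \sum_(z <- pasc_first_vec L th X) z = qcfs_vec L th X.
Proof.
move=> hL hth; rewrite /pasc_first_vec sum_lift.
  apply/rowP => j; rewrite !mxE /pasc_first.
  have hL' : 0 < L%:R :> R by rewrite ltr0n.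
  have hp : 0 < th / L%:R by rewrite divr_gt0.
  have Eq : qcfs L th (X 0 j) = (clampz (Num.floor (X 0 j * L%:R / th + 2^-1)) L)%:~R * (th / L%:R).
    by rewrite /qcfs clip_clamp.
  have [-> _] := fire_sum L hp Eq; rewrite Eq.
  by congr (_%:~R * _); rewrite /clampz; lia.
by move=> j; rewrite /pasc_first size_fire.
Qed.

Lemma classif_scale c (a : R) (v : 'rV[R]_c) k : a != 0 ->
  classif (a *: v) k = classif v k.
Proof.
move=> ha; rewrite /classif mxE.
under eq_bigr do rewrite mxE.
by rewrite -mulr_sumr invfM mulrACA mulfV // mul1r.
Qed.

Lemma body_ok c m (B : body R c m) : body_wf B ->
  forall Lprev (X : seq 'rV[R]_m), (0 < Lprev)%N -> size X = Lprev ->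
  exists a : R, a != 0 /\ body_pasc Lprev B X = a *: body_eval B (\sum_(x <- X) x).
Proof.
elim: B => [m0 L th M | m0 k L th M B IH] /= hwf Lprev X hp hs.
  case: hwf => hL hth.
  exists (L%:R^-1); split; first by rewrite invr_neq0 // pnatr_eq0 -lt0n.
  rewrite /snn_output big_map sum_mm_step //; last by rewrite /pasc_later_vec size_lift.
  by rewrite later_vec.
case: hwf => hL hth hB.
have [|a [ha ->]] := IH hB L (map (mm_step M L) (pasc_later_vec Lprev L th X)) hL.
  by rewrite size_map /pasc_later_vec size_lift.
exists a; split => //.
rewrite big_map sum_mm_step //; last by rewrite /pasc_later_vec size_lift.
by rewrite later_vec.
Qed.
End S.

Unset Implicit Arguments.
Theorem theorem4 (R : realType) (c d0 : nat) (N : net R c d0) :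
  net_wf N ->
  forall (z : 'rV[R]_d0) (k : 'I_c),
    classif (pasc_eval N z) k = classif (ann_eval N z) k.
Proof.
move=> hwf z k.
case: N hwf => d1 M1 B /= hwf.
move: (mm_apply M1 z) => X.
case: B hwf X => [m L th M | m k' L th M B] /= hwf X.
  case: hwf => hL hth.
  rewrite /snn_output big_map sum_mm_step //; last by rewrite /pasc_first_vec size_lift.
  rewrite first_vec // classif_scale //.
  by rewrite invr_neq0 // pnatr_eq0 -lt0n.
case: hwf => hL hth hB.
have [|a [ha ->]] := body_ok hB (X := map (mm_step M L) (pasc_first_vec L th X)) hL.
  by rewrite size_map /pasc_first_vec size_lift.
rewrite big_map sum_mm_step //; last by rewrite /pasc_first_vec size_lift.
by rewrite first_vec // classif_scale.
Qed.
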